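(* Let $A$ be an $n\times m$ Boolean matrix and $B$ an $m\times n$ Boolean matrix, and suppose neither $A$ nor $B$ has a zero line (zero row or zero column). If $AB$ and $BA$ are both primitive, then $$|k(AB)-k(BA)|\leq 1.$$
   Context: All matrices are Boolean $(0,1)$-matrices, and products are computed in Boolean arithmetic ($1+1=1$, $0+0=0$, $1+0=1$). A square nonnegative (Boolean) matrix $C$ is primitive if $C^r$ has all entries positive for some positive integer $r$. For a primitive matrix $C$, its scrambling index $k(C)$ is the smallest positive integer $k$ such that any two rows of $C^k$ have a positive entry in a common position; equivalently, the smallest positive integer $k$ with $C^k(C^t)^k=J$, where $C^t$ is the transpose and $J$ is the all-ones matrix. *)

(* Defs.v *)
From mathcomp Require Import all_boot all_algebra.
Set Implicit Arguments. Unset Strict Implicit. Unset Printing Implicit Defensive.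

(* Boolean (0,1)-matrices, represented as matrices with entries in bool
   (true = 1, false = 0), with Boolean arithmetic (1+1=1). *)

Definition bmul (n m p : nat) (A : 'M[bool]_(n, m)) (B : 'M[bool]_(m, p))
  : 'M[bool]_(n, p) :=
  \matrix_(i, j) [exists k : 'I_m, A i k && B k j].

Definition bid (n : nat) : 'M[bool]_n := \matrix_(i, j) (i == j).

Fixpoint bpow (n : nat) (C : 'M[bool]_n) (k : nat) : 'M[bool]_n :=
  match k with
  | 0 => bid n
  | k'.+1 => bmul C (bpow C k')
  end.

Definition is_J (n m : nat) (M : 'M[bool]_(n, m)) : Prop :=
  forall i j, M i j = true.

Definition no_zero_line (n m : nat) (A : 'M[bool]_(n, m)) : Prop :=
  (forall i : 'I_n, exists j : 'I_m, A i j = true) /\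
  (forall j : 'I_m, exists i : 'I_n, A i j = true).

Definition primitive (n : nat) (C : 'M[bool]_n) : Prop :=
  exists r, 0 < r /\ is_J (bpow C r).

Definition scrambles (n : nat) (C : 'M[bool]_n) (k : nat) : Prop :=
  is_J (bmul (bpow C k) (bpow C^T k)).

Definition scrambling_index (n : nat) (C : 'M[bool]_n) (k : nat) : Prop :=
  0 < k /\ scrambles C k /\ (forall j, 0 < j < k -> ~ scrambles C j).

(* Main.v *)
Require Import Defs.
From mathcomp Require Import all_boot all_algebra.

Lemma bmulE (n m p : nat) (A : 'M[bool]_(n, m)) (B : 'M[bool]_(m, p)) i j :
  bmul A B i j = [exists k, A i k && B k j].
Proof. by rewrite /bmul mxE. Qed.

Lemma bmulA (n m p q : nat) (A : 'M[bool]_(n, m)) (B : 'M[bool]_(m, p))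
  (C : 'M[bool]_(p, q)) : bmul A (bmul B C) = bmul (bmul A B) C.
Proof.
apply/matrixP=> i j; rewrite !bmulE; apply/existsP/existsP.
- move=> [k /andP[H1]]; rewrite bmulE => /existsP[l /andP[H2 H3]].
  by exists l; rewrite H3 andbT bmulE; apply/existsP; exists k; rewrite H1.
- move=> [l /andP[]]; rewrite bmulE => /existsP[k /andP[H1 H2]] H3.
  by exists k; rewrite H1 bmulE; apply/existsP; exists l; rewrite H2.
Qed.

Lemma bmul1 (n m : nat) (A : 'M[bool]_(n, m)) : bmul (bid n) A = A.
Proof.
apply/matrixP=> i j; rewrite bmulE; apply/existsP/idP.
- by move=> [k]; rewrite mxE => /andP[/eqP -> ].
- by move=> H; exists i; rewrite mxE eqxx.
Qed.

Lemma bmul1r (n m : nat) (A : 'M[bool]_(n, m)) : bmul A (bid m) = A.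
Proof.
apply/matrixP=> i j; rewrite bmulE; apply/existsP/idP.
- by move=> [k]; rewrite mxE => /andP[H /eqP E]; rewrite -E.
- by move=> H; exists j; rewrite mxE eqxx andbT.
Qed.

Lemma bmulT (n m p : nat) (A : 'M[bool]_(n, m)) (B : 'M[bool]_(m, p)) :
  trmx (bmul A B) = bmul (trmx B) (trmx A).
Proof.
apply/matrixP=> i j; rewrite mxE !bmulE; apply/existsP/existsP;
  by move=> [k /andP[H1 H2]]; exists k; rewrite ?mxE in H1 H2 *; rewrite H1 H2.
Qed.

Lemma bpowSr (n : nat) (C : 'M[bool]_n) k :
  bpow C k.+1 = bmul (bpow C k) C.
Proof.
elim: k => [|k IH] /=; first by rewrite bmul1 bmul1r.
by rewrite -bmulA -IH.
Qed.

Lemma bpowT (n : nat) (C : 'M[bool]_n) k : bpow (trmx C) k = trmx (bpow C k).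
Proof.
elim: k => [|k IH] /=.
  by apply/matrixP=> i j; rewrite !mxE eq_sym.
by rewrite IH -bmulT -bpowSr.
Qed.

Lemma bpowAB (n m : nat) (A : 'M[bool]_(n, m)) (B : 'M[bool]_(m, n)) k :
  bpow (bmul A B) k.+1 = bmul A (bmul (bpow (bmul B A) k) B).
Proof.
elim: k => [|k IH].
  by rewrite /= bmul1r bmul1.
change (bpow (bmul A B) k.+2) with (bmul (bmul A B) (bpow (bmul A B) k.+1)).
change (bpow (bmul B A) k.+1) with (bmul (bmul B A) (bpow (bmul B A) k)).
by rewrite IH -!bmulA.
Qed.

Lemma step (n m : nat) (A : 'M[bool]_(n, m)) (B : 'M[bool]_(m, n)) k :
  no_zero_line A -> no_zero_line B ->
  scrambles (bmul B A) k -> scrambles (bmul A B) k.+1.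
Proof.
move=> [rA _] [rB _] H i j.
rewrite /scrambles bpowT bpowAB bmulE.
set P := bpow (bmul B A) k.
have [a Ha] := rA i; have [a' Ha'] := rA j.
have := H a a'; rewrite bpowT bmulE => /existsP[l /andP[H1 H2]].
rewrite mxE in H2.
have [b Hb] := rB l.
apply/existsP; exists b; apply/andP; split.
- rewrite bmulE; apply/existsP; exists a; rewrite Ha bmulE /=.
  by apply/existsP; exists l; rewrite H1 Hb.
- rewrite mxE bmulE; apply/existsP; exists a'; rewrite Ha' bmulE /=.
  by apply/existsP; exists l; rewrite H2 Hb.
Qed.

Lemma halfk (n m : nat) (A : 'M[bool]_(n, m)) (B : 'M[bool]_(m, n)) kAB kBA :
  no_zero_line A -> no_zero_line B ->
  scrambling_index (bmul A B) kAB -> scrambling_index (bmul B A) kBA ->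
  kAB <= kBA.+1.
Proof.
move=> nA nB [_ [_ minAB]] [pBA [sBA _]].
rewrite leqNgt; apply/negP => Hlt.
by apply: (minAB kBA.+1) => //; apply: step.
Qed.

Theorem lemma2p1 (n m : nat) (A : 'M[bool]_(n, m)) (B : 'M[bool]_(m, n))
  (kAB kBA : nat) :
  no_zero_line A -> no_zero_line B ->
  primitive (bmul A B) -> primitive (bmul B A) ->
  scrambling_index (bmul A B) kAB -> scrambling_index (bmul B A) kBA ->
  kAB <= kBA.+1 /\ kBA <= kAB.+1.
Proof.
move=> nA nB _ _ sAB sBA; split; [exact: (halfk _ _ _ _ _ _ nA nB sAB sBA) | exact: (halfk _ _ _ _ _ _ nB nA sBA sAB)].
Qed.
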